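(* Let $M = (E,\mathcal{I})$ be a graphic or cographic matroid with $\lvert E\rvert = m \ge 2$, let $w\colon E\to\mathbb{N}$ be a weight function, let $R\subseteq E$ with $\lvert R\rvert \le 1$ (possibly empty), and let $r$ be a positive integer. If there is no circuit $C$ of $M$ with $w(C) < r$ and $C\cap R = \emptyset$, then for every integer $\alpha\ge 2$, the number of circuits $C$ of $M$ with $R\subseteq C$ and $w(C) < \alpha r/2$ is at most $(2(m - \lvert R\rvert))^{\alpha}$.
   Context: A graphic matroid $M(G)$ of an undirected (multi)graph $G=(V,E)$ has ground set $E$ and independent sets the forests of $G$; its circuits are the simple cycles of $G$. A cographic matroid is the dual of a graphic matroid; its circuits are the inclusionwise minimal cut-sets of $G$. A circuit of a matroid is an inclusionwise minimal dependent set. For $C\subseteq E$, $w(C) := \sum_{e\in C} w(e)$. *)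

(* Defs.v *)
From mathcomp Require Import all_boot.
Set Implicit Arguments. Unset Strict Implicit. Unset Printing Implicit Defensive.

(* A finite multigraph: vertex type V, edge type E, and each edge e has
   endpoints (ends e).1 and (ends e).2 (loops allowed when they coincide). *)
Section Matroids.
Variables (V E : finType) (ends : E -> V * V).

Definition adj_in (F : {set E}) : rel V :=
  fun x y => [exists f in F, ((ends f == (x, y)) || (ends f == (y, x)))].

(* A forest: no edge e of F has its endpoints connected in F \ {e}
   (i.e. F contains no cycle; loops are excluded automatically). *)
Definition is_forest (F : {set E}) : bool :=
  [forall e in F, ~~ connect (adj_in (F :\ e)) (ends e).1 (ends e).2].

Definition is_basis (indep : {set E} -> bool) (B : {set E}) : bool :=
  indep B && [forall B' : {set E}, (B \proper B') ==> ~~ indep B'].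

Definition dual_indep (indep : {set E} -> bool) (I : {set E}) : bool :=
  [exists B : {set E}, is_basis indep B && [disjoint B & I]].

Definition is_circuit (indep : {set E} -> bool) (C : {set E}) : bool :=
  ~~ indep C && [forall D : {set E}, (D \proper C) ==> indep D].

Definition graph_matroid_indep (cographic : bool) : {set E} -> bool :=
  if cographic then dual_indep is_forest else is_forest.

End Matroids.

Definition wsum (E : finType) (w : E -> nat) (C : {set E}) : nat :=
  \sum_(e in C) w e.

(* Main.v *)
From Stdlib Require Import ClassicalEpsilon.
Require Import Defs.
From mathcomp Require Import all_boot zify.
Set Implicit Arguments. Unset Strict Implicit. Unset Printing Implicit Defensive.

Section G.
Variables (V E : finType) (ends : E -> V * V).
Implicit Types (F B A : {set E}) (X : {set V}).
Local Notation conn F := (connect (adj_in ends F)).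
Local Notation forest := (is_forest ends).

Lemma adj_inP F x y : reflect (exists2 f, f \in F & (ends f == (x,y)) || (ends f == (y,x)))
  (adj_in ends F x y).
Proof.
apply: (iffP existsP) => [[f /andP[fF h]]|[f fF h]]; first by exists f.
by exists f; rewrite fF.
Qed.

Lemma adj_sym F : symmetric (adj_in ends F).
Proof.
move=> x y; apply/adj_inP/adj_inP => -[f fF h]; exists f => //; by rewrite orbC.
Qed.

Lemma conn_sym F x y : conn F x y = conn F y x.
Proof. exact: (sym_connect_sym (adj_sym F)). Qed.

Lemma conn_trans F x y z : conn F x y -> conn F y z -> conn F x z.
Proof. exact: connect_trans. Qed.

Lemma conn_edge F f : f \in F -> conn F (ends f).1 (ends f).2.
Proof. move=> fF; apply: connect1; apply/adj_inP; exists f => //; by rewrite -surjective_pairing eqxx. Qed.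

Lemma conn_edge' F f : f \in F -> conn F (ends f).2 (ends f).1.
Proof. by move=> fF; rewrite conn_sym conn_edge. Qed.

Lemma conn_sub F F' : (forall f, f \in F -> conn F' (ends f).1 (ends f).2) ->
  forall x y, conn F x y -> conn F' x y.
Proof.
move=> H; apply: connect_sub => x y /adj_inP [f fF /orP[] /eqP ef];
  have := H f fF; rewrite ef //= conn_sym //.
Qed.

Lemma conn_mono F F' : F \subset F' -> forall x y, conn F x y -> conn F' x y.
Proof. move=> sF; apply: conn_sub => f fF; apply: conn_edge; exact: (subsetP sF). Qed.
Arguments conn_mono {F F'}.

Lemma conn_cross F (X : {set V}) x y : conn F x y -> x \in X -> y \notin X ->
  exists2 f, f \in F & ((ends f).1 \in X) != ((ends f).2 \in X).
Proof.
case/connectP=> p; elim: p x => [|z p IH] x /=; first by move=> _ -> ->.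
case/andP=> axz pz ly xX yX.
case: (boolP (z \in X)) => zX; first exact: IH pz ly zX yX.
case/adj_inP: axz => f fF /orP[] /eqP ef; exists f => //; by rewrite ef /= xX (negbTE zX).

Qed.

Lemma conn_add F e x y : conn (e |: F) x y ->
  [\/ conn F x y, conn F x (ends e).1 /\ conn F (ends e).2 y |
      conn F x (ends e).2 /\ conn F (ends e).1 y].
Proof.
case/connectP=> p; elim: p x => [|z p IH] x /=; first by move=> _ ->; constructor 1.
case/andP=> axz pz ly; have := IH z pz ly.
case/adj_inP: axz => f; rewrite in_setU1 => /orP[/eqP-> | fF] ef.
  case/orP: ef => /eqP ->/=.
    case=> [h|[h1 h2]|[h1 h2]].
    - by constructor 2.
    - by constructor 2.
    - by constructor 1.
  case=> [h|[h1 h2]|[h1 h2]].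
  - by constructor 3.
  - by constructor 1.
  - by constructor 3.
have xz : conn F x z.
  case/orP: ef => /eqP ef; have := conn_edge fF; rewrite ef //= conn_sym //.
case=> [h|[h1 h2]|[h1 h2]].
- constructor 1; exact: conn_trans xz h.
- constructor 2; split => //; exact: conn_trans xz h1.
- constructor 3; split => //; exact: conn_trans xz h1.
Qed.

Lemma forestP F : reflect (forall e, e \in F -> ~~ conn (F :\ e) (ends e).1 (ends e).2) (forest F).
Proof. exact: forall_inP. Qed.

Lemma forest_sub A B : A \subset B -> forest B -> forest A.
Proof.
move=> sAB /forestP fB; apply/forestP => e eA; apply: contra (fB e (subsetP sAB e eA)).
apply: conn_mono; exact: setSD.
Qed.

Lemma notforest_conn B e : forest B -> e \notin B -> ~~ forest (e |: B) ->
  conn B (ends e).1 (ends e).2.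
Proof.
move=> /forestP fB eB /forestP nf.
have [f] : exists2 f, f \in e |: B & conn ((e |: B) :\ f) (ends f).1 (ends f).2.
  apply/exists_inP; move: nf; apply: contra_notN => /exists_inP nex f fin.
  by apply/negP => c; apply: nex; exists f.
rewrite in_setU1 => /orP[/eqP -> | fB'].
  by rewrite setU1K.
have eq1 : (e |: B) :\ f = e |: (B :\ f).
  by apply/setP => z; rewrite !inE; case: (z =P e) => [->|]; rewrite ?andbT //;
     move: eB; case: (e =P f) => [->|]; rewrite ?fB' //.
rewrite eq1 => /conn_add [h|[h1 h2]|[h1 h2]].
- by have := fB f fB'; rewrite h.
- have s : B :\ f \subset B by apply: subD1set.
  apply: (conn_trans (y:=(ends f).1)); first by rewrite conn_sym; apply: (conn_mono s).
  apply: (conn_trans (y:=(ends f).2)); first exact: conn_edge.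
  by rewrite conn_sym; apply: (conn_mono s).
- have s : B :\ f \subset B by apply: subD1set.
  apply: (conn_trans (y:=(ends f).2)); first by apply: (conn_mono s).
  apply: (conn_trans (y:=(ends f).1)); first exact: conn_edge'.
  by apply: (conn_mono s).
Qed.

Lemma conn_notforest B e : e \notin B -> conn B (ends e).1 (ends e).2 -> ~~ forest (e |: B).
Proof.
move=> eB c; apply/forestP => h; have := h e (setU11 _ _); by rewrite setU1K // c.
Qed.

Lemma basis_ext B e : is_basis forest B -> e \notin B -> ~~ forest (e |: B).
Proof.
case/andP=> _ /forallP h eB; apply: (implyP (h (e |: B))).
by rewrite properUr // sub1set.
Qed.

Lemma basis_intro B : forest B -> (forall e, e \notin B -> ~~ forest (e |: B)) ->
  is_basis forest B.
Proof.
move=> fB h; rewrite /is_basis fB; apply/forallP => B'; apply/implyP => /properP [sBB' [e eB' eB]].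
apply: contra (h e eB); apply: forest_sub; by rewrite subUset sub1set eB'.
Qed.

Lemma basis_forest B : is_basis forest B -> forest B.
Proof. by case/andP. Qed.

End G.

Lemma ex_circuit (T : finType) (indep : {set T} -> bool) D :
  ~~ indep D -> exists2 C, is_circuit indep C & C \subset D.
Proof.
move=> nD; have [C mC sCD] := minset_exists (P := fun A => ~~ indep A) nD.
exists C => //; case/minsetP: mC => nC minC; rewrite /is_circuit nC.
apply/forallP => D'; apply/implyP => pD'; apply/negPn/negP => nD'.
have := minC D' nD' (proper_sub pD'); move=> eq; by rewrite eq properE subxx andbF in pD'.
Qed.

Section Co.
Variables (V E : finType) (ends : E -> V * V).
Implicit Types (F B A C D : {set E}) (X S : {set V}).
Local Notation conn F := (connect (adj_in ends F)).
Local Notation forest := (is_forest ends).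
Local Notation dual := (dual_indep (is_forest ends)).
Definition cut X := [set e | ((ends e).1 \in X) != ((ends e).2 \in X)].

Lemma cut_dep X : cut X != set0 -> ~~ dual (cut X).
Proof.
case/set0Pn => e; rewrite inE => ecut; apply/existsP => -[B /andP[bB disj]].
have fB := basis_forest bB.
case: (boolP (e \in B)) => eB.
  by have := disjointFr disj eB; rewrite inE ecut.
have c := notforest_conn fB eB (basis_ext bB eB).
suff [f fB' fc] : exists2 f, f \in B & ((ends f).1 \in X) != ((ends f).2 \in X).
  by have := disjointFr disj fB'; rewrite inE fc.
case: (boolP ((ends e).1 \in X)) => h1.
  by apply: (conn_cross c) => //; move: ecut; rewrite h1; case: ((ends e).2 \in X).
have h2 : (ends e).2 \in X by move: ecut; rewrite (negbTE h1); case: ((ends e).2 \in X).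
by apply: (conn_cross (x := (ends e).2) (y := (ends e).1)) => //; rewrite conn_sym.
Qed.

Lemma dual_intro D : (forall e, e \in D -> conn (~: D) (ends e).1 (ends e).2) -> dual D.
Proof.
move=> H.
have P0 : (fun B => forest B && (B \subset ~: D)) set0.
  by rewrite sub0set andbT; apply/forestP => e; rewrite inE.
have [B mB _] := @maxset_exists _ (fun B => forest B && (B \subset ~: D)) set0 P0.
case/maxsetP: mB => /andP[fB sBD] maxB.
have ext1 : forall e, e \notin B -> e \notin D -> ~~ forest (e |: B).
  move=> e eB eD; apply/negP => fe.
  have := maxB (e |: B); rewrite fe subUset sub1set inE eD sBD subsetUr => /(_ isT isT) eq.
  by move: eB; rewrite -eq setU11.
have cB : forall x y, conn (~: D) x y -> conn B x y.
  apply: conn_sub => f; rewrite inE => fD.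
  case: (boolP (f \in B)) => fB'; first exact: conn_edge.
  exact: notforest_conn fB fB' (ext1 f fB' fD).
apply/existsP; exists B.
have -> : [disjoint B & D] by rewrite -[D]setCK -subsets_disjoint.
rewrite andbT; apply: basis_intro => // e eB.
case: (boolP (e \in D)) => eD; last exact: ext1.
by apply: conn_notforest => //; apply: cB; apply: H.
Qed.

Lemma cocircuit_cut C : is_circuit dual C ->
  exists S, C = cut S /\ (forall x y, conn (~: C) x y -> (x \in S) = (y \in S)).
Proof.
case/andP=> nC /forallP minC.
have [e eC ne] : exists2 e, e \in C & ~~ conn (~: C) (ends e).1 (ends e).2.
  apply/exists_inP; apply: contraR nC => /exists_inP nex; apply: dual_intro => e eC.
  by apply/negPn/negP => h; apply: nex; exists e.
set S := [set y | conn (~: C) (ends e).1 y].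
have clos : forall x y, conn (~: C) x y -> (x \in S) = (y \in S).
  move=> x y cxy; rewrite !inE; apply/idP/idP => h; first exact: conn_trans h cxy.
  by apply: conn_trans h _; rewrite conn_sym.
exists S; split => //.
have sub : cut S \subset C.
  apply/subsetP => f; rewrite inE; apply: contraTT => fC.
  have cf : conn (~: C) (ends f).1 (ends f).2 by apply: conn_edge; rewrite inE.
  by rewrite (clos _ _ cf) eqxx.
have ecut : e \in cut S by rewrite inE !inE connect0 ne.
have dep : ~~ dual (cut S) by apply: cut_dep; apply/set0Pn; exists e.
case: (eqVproper sub) => // pr; by move: (implyP (minC _) pr); rewrite (negbTE dep).
Qed.

End Co.

Definition pb (P : Prop) : bool := if excluded_middle_informative P then true else false.
Lemma pbP P : reflect P (pb P).
Proof. rewrite /pb; case: excluded_middle_informative => h; by constructor. Qed.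

Lemma card_le_code (T : finType) (X : eqType) (A : {set T}) (L : seq X) (Rel : T -> X -> Prop) :
  (forall a, a \in A -> exists2 x, x \in L & Rel a x) ->
  (forall a b x, a \in A -> b \in A -> Rel a x -> Rel b x -> a = b) -> #|A| <= size L.
Proof.
elim: L A => [|x L IH] A ex un.
  by rewrite leqn0 cards_eq0; apply/eqP/setP => a; rewrite inE; apply/negP => /ex [].
set A' := [set a in A | ~~ pb (Rel a x)].
have h1 : #|A'| <= size L.
  apply: IH; last by move=> a b y; rewrite !inE => /andP[aA _] /andP[bA _]; exact: un.
  move=> a; rewrite inE => /andP[aA /pbP nR]; have [y] := ex a aA.
  by rewrite inE => /orP[/eqP -> //|yL] R; exists y.
have h2 : #|A :\: A'| <= 1.
  apply/card_le1_eqP => a b; rewrite !inE !negb_and !negbK => /andP[ha aA] /andP[hb bA].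
  rewrite aA bA /= in ha hb; move/pbP: ha => Ra; move/pbP: hb => Rb.
  symmetry; exact: un Ra Rb.
have : #|A| <= #|A :\: A'| + #|A'|.
  by rewrite cardsD (setIidPr _) ?subnK ?subset_leq_card //; apply/subsetP => a; rewrite inE => /andP[].
move=> h; apply: leq_trans h _; rewrite /= -add1n; exact: leq_add.
Qed.

Section Cl.
Variables (V E : finType) (ends : E -> V * V).
Implicit Types (F B A C D G : {set E}) (X S T : {set V}).
Local Notation conn F := (connect (adj_in ends F)).
Local Notation dual := (dual_indep (is_forest ends)).

Definition cl F x := [set y | conn F x y].
Definition classes F := (cl F) @: [set: V].
Definition kc F := #|classes F|.

Lemma cl_eq F x y : (cl F x == cl F y) = conn F x y.
Proof.
apply/eqP/idP => [h|c].
  have : y \in cl F y by rewrite inE connect0.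
  by rewrite -h inE.
apply/setP => z; rewrite !inE; apply/idP/idP => h; first by rewrite conn_sym in c; exact: conn_trans c h.
exact: conn_trans c h.
Qed.

Lemma cl_eqP F x y : reflect (cl F x = cl F y) (conn F x y).
Proof. by rewrite -cl_eq; apply: eqP. Qed.

Definition hm F e X := \bigcup_(y in X) cl (e |: F) y.

Lemma hm_cl F e x : hm F e (cl F x) = cl (e |: F) x.
Proof.
apply/setP => z; apply/bigcupP/idP => [[y]|h]; last by exists x; rewrite // inE connect0.
rewrite !inE => cxy cyz; apply: conn_trans cyz.
by apply: (conn_mono (F := F)) => //; apply: subsetUr.
Qed.

Lemma classes_add F e : classes (e |: F) = hm F e @: classes F.
Proof. by rewrite /classes -imset_comp; apply: eq_imset => x /=; rewrite hm_cl. Qed.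

Lemma kc_add_lt F e : ~~ conn F (ends e).1 (ends e).2 -> kc (e |: F) < kc F.
Proof.
move=> nc; rewrite /kc classes_add ltn_neqAle leq_imset_card andbT.
apply/negP => /imset_injP inj.
have h : hm F e (cl F (ends e).1) = hm F e (cl F (ends e).2).
  by rewrite !hm_cl; apply/cl_eqP; apply: conn_edge; apply: setU11.
have := inj _ _ (imset_f _ (in_setT _)) (imset_f _ (in_setT _)) h.
by move/cl_eqP; rewrite (negbTE nc).
Qed.

Lemma kc_add_le F e : kc F <= (kc (e |: F)).+1.
Proof.
rewrite /kc (cardsD1 (cl F (ends e).1)) classes_add.
rewrite -add1n; apply: leq_add; first by case: (_ \in _).
rewrite -(card_in_imset (f := hm F e)); first by apply: subset_leq_card; apply: imsetS; apply: subD1set.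
move=> X Y; rewrite !inE => /andP[nX /imsetP[x _ eX]] /andP[nY /imsetP[y _ eY]]; subst X Y.
rewrite !hm_cl => /cl_eqP /conn_add [h|[h1 h2]|[h1 h2]].
- by apply/cl_eqP.
- by move: nX; rewrite cl_eq h1.
- by move: nY; rewrite eq_sym cl_eq h2.
Qed.

Lemma kc_addset F G : kc F <= kc (G :|: F) + #|G|.
Proof.
move: {2}#|G| (leqnn #|G|) => n; elim: n G => [|n IH] G hG.
  by move: hG; rewrite leqn0 cards_eq0 => /eqP ->; rewrite set0U cards0 addn0.
case: (set_0Vmem G) => [->|[e eG]]; first by rewrite set0U leq_addr.
have hG' : #|G :\ e| <= n by move: hG; rewrite (cardsD1 e G) eG.
apply: (leq_trans (IH _ hG')).
rewrite (cardsD1 e G) eG add1n addnS -addSn leq_add2r.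
have -> : G :|: F = e |: ((G :\ e) :|: F).
  by rewrite setUA setD1K.
exact: kc_add_le.
Qed.

Variable rho : V -> V.
Hypothesis rho1 : forall x, conn [set: E] x (rho x).
Hypothesis rho2 : forall x y, conn [set: E] x y -> rho x = rho y.

Lemma rho_idem x : rho (rho x) = rho x.
Proof. by symmetry; apply: rho2. Qed.

Definition RT := rho @: [set: V].
Definition NR F := classes F :\: (cl F) @: RT.

Lemma RC_card F : #|(cl F) @: RT| = #|RT|.
Proof.
apply: card_in_imset => p q /imsetP[x _ ->] /imsetP[y _ ->] /cl_eqP c.
rewrite -(rho_idem x) -(rho_idem y); apply: rho2.
by apply: (conn_mono (F := F)) => //; apply: subsetT.
Qed.

Lemma RC_sub F : (cl F) @: RT \subset classes F.
Proof. by apply/subsetP => X /imsetP[p _ ->]; apply: imset_f. Qed.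

Lemma NR_card F : #|NR F| = kc F - #|RT|.
Proof. by rewrite cardsD (setIidPr (RC_sub F)) RC_card. Qed.

Lemma kc_ge F : #|RT| <= kc F.
Proof. by rewrite -(RC_card F); apply: subset_leq_card; apply: RC_sub. Qed.

Lemma NRP F X : reflect (exists2 x, X = cl F x & ~~ conn F x (rho x)) (X \in NR F).
Proof.
apply: (iffP idP).
  rewrite inE => /andP[nRC /imsetP[x _ eX]]; subst X; exists x => //.
  apply: contra nRC => /cl_eqP ->; apply: imset_f; exact: imset_f.
move=> [x -> nc]; rewrite /NR inE [_ \in classes F]imset_f ?in_setT // andbT.
apply/negP => /imsetP[p /imsetP[y _ ->] /cl_eqP c].
have cE : conn [set: E] x (rho y) by apply: (conn_mono (F := F)) => //; apply: subsetT.
by move: nc; rewrite (rho2 cE) rho_idem c.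
Qed.

Lemma NR_setT : NR [set: E] = set0.
Proof. by apply/setP => X; rewrite in_set0; apply/negP => /NRP[x _]; rewrite rho1. Qed.

Lemma kc_setT : kc [set: E] = #|RT|.
Proof.
have := NR_card [set: E]; rewrite NR_setT cards0 => /esym/eqP; rewrite subn_eq0 => h.
by apply/eqP; rewrite eqn_leq h kc_ge.
Qed.

Lemma s0_le : kc set0 - #|RT| <= #|E|.
Proof.
have := kc_addset set0 [set: E]; rewrite setU0 kc_setT cardsT.
by rewrite leq_subLR addnC.
Qed.

Definition Tset S := [set x | (x \in S) != (rho x \in S)].

Lemma base_count F (L : {set {set E}}) :
  (forall C, C \in L -> is_circuit dual C /\ [disjoint C & F]) ->
  #|L| <= 2 ^ #|NR F|.
Proof.
move=> HL; rewrite -card_powerset [X in _ <= X]cardE.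
apply: (card_le_code (Rel := fun C TT => exists S, [/\ C = cut ends S,
   (forall x y, conn F x y -> (x \in S) = (y \in S)) & TT = (cl F) @: Tset S])).
  move=> C /HL [cC dCF]; have [S [eC cS]] := cocircuit_cut cC.
  have cS' : forall x y, conn F x y -> (x \in S) = (y \in S).
    move=> x y c; apply: cS; apply: (conn_mono (F := F)) => //.
    by rewrite subsets_disjoint setCK disjoint_sym.
  exists ((cl F) @: Tset S); last by exists S.
  rewrite mem_enum powersetE; apply/subsetP => X /imsetP[x]; rewrite inE => hx ->.
  apply/NRP; exists x => //; apply: contra hx => c; by rewrite (cS' _ _ c).
have key : forall C TT, (exists S, [/\ C = cut ends S,
   (forall x y, conn F x y -> (x \in S) = (y \in S)) & TT = (cl F) @: Tset S]) ->
   C = [set e | ((ends e).1 \in cover TT) != ((ends e).2 \in cover TT)].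
  move=> C TT [S [-> cS ->]].
  have cov : cover ((cl F) @: Tset S) = Tset S.
    apply/setP => z; rewrite cover_imset; apply/bigcupP/idP => [[x]|zT]; last first.
      by exists z; rewrite // inE connect0.
    rewrite !inE => hx c.
    have cE : conn [set: E] x z by apply: (conn_mono (F := F)) => //; apply: subsetT.
    by rewrite -(cS _ _ c) -(rho2 cE).
  apply/setP => e; rewrite cov !inE.
  have cE : conn [set: E] (ends e).1 (ends e).2 by apply: conn_edge; apply: in_setT.
  rewrite (rho2 cE).
  by case: ((ends e).1 \in S); case: ((ends e).2 \in S); case: (rho (ends e).2 \in S).
by move=> a b x _ _ /key -> /key ->.
Qed.

End Cl.

Lemma arith_step (N M W2 a r t : nat) : N * (W2 - a * r) <= W2 * M -> r * t <= W2 ->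
  a < t -> 0 < r -> N * (t - a) <= t * M.
Proof.
move=> h1 h2 h3 h4.
have d0 : a * r < W2 by nia.
move: h1 h2; have -> : W2 = a * r + (W2 - a * r) by lia.
rewrite addKn; set d := W2 - a * r.
have -> : t = a + (t - a) by lia.
rewrite addKn; set u := t - a => h1 h2.
have ru : r * u <= d by nia.
have d1 : 0 < d by nia.
nia.
Qed.

Section Karger.
Variables (V E : finType) (ends : E -> V * V).
Implicit Types (F B A C D G : {set E}) (X S T : {set V}).
Local Notation conn F := (connect (adj_in ends F)).
Local Notation dual := (dual_indep (is_forest ends)).
Variable rho : V -> V.
Hypothesis rho1 : forall x, conn [set: E] x (rho x).
Hypothesis rho2 : forall x y, conn [set: E] x y -> rho x = rho y.
Variables (w : E -> nat) (R : {set E}) (r alpha : nat).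
Hypothesis r_gt0 : 0 < r.
Hypothesis alpha_gt1 : 1 < alpha.
Hypothesis Hc : forall C, is_circuit dual C -> [disjoint C & R] -> r <= wsum w C.
Hypothesis HR : forall F, #|[set X in NR ends rho F | ~~ [disjoint cut ends X & R]]| <= #|R|.

Definition Lset F := [set C | [&& is_circuit dual C, R \subset C, 2 * wsum w C < alpha * r
   & [disjoint C & F]]].
Definition Nf F := #|Lset F|.
Definition NF F := [set e | ~~ conn F (ends e).1 (ends e).2] :\: R.
Definition WF F := \sum_(e in NF F) w e.

Lemma wsum_sub C D : C \subset D -> wsum w C <= wsum w D.
Proof.
move=> sCD; rewrite /wsum [X in _ <= X](bigID (fun e => e \in C)) /=.
apply: leq_trans (leq_addr _ _); rewrite [X in _ <= X](eq_bigl (fun e => e \in C)) //.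
by move=> e; rewrite andb_idl // => /(subsetP sCD).
Qed.

Lemma NR_cut F X : X \in NR ends rho F -> exists e, e \in cut ends X.
Proof.
case/(NRP rho1 rho2) => x -> nc.
have h1 : x \in cl ends F x by rewrite inE connect0.
have h2 : rho x \notin cl ends F x by rewrite inE.
have [f _ hf] := conn_cross (rho1 x) h1 h2.
by exists f; rewrite inE.
Qed.

Lemma NR_cut_mem F X e : X \in NR ends rho F -> e \in cut ends X ->
  ~~ conn F (ends e).1 (ends e).2 /\ (X = cl ends F (ends e).1 \/ X = cl ends F (ends e).2).
Proof.
case/(NRP rho1 rho2) => x -> _; rewrite !inE => h; split.
  apply: contra h => c; apply/eqP; apply/idP/idP => h'.
    exact: conn_trans h' c.
  by apply: conn_trans h' _; rewrite conn_sym.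
case: (boolP (conn F x (ends e).1)) => h1; first by left; apply/cl_eqP.
by right; apply/cl_eqP; move: h; rewrite (negbTE h1); case: (conn F x _).
Qed.

Lemma star F : r * (#|NR ends rho F| - #|R|) <= 2 * WF F.
Proof.
set D := [set X | [disjoint cut ends X & R]].
set Good := NR ends rho F :&: D.
have hG : #|NR ends rho F| - #|R| <= #|Good|.
  rewrite leq_subLR -(cardsID D (NR ends rho F)) addnC leq_add2r.
  apply: leq_trans (HR F); apply: eq_leq; apply: eq_card => X.
  by rewrite !inE andbC.
apply: leq_trans (leq_mul (leqnn r) hG) _.
have step1 : r * #|Good| <= \sum_(X in Good) wsum w (cut ends X).
  rewrite mulnC -sum_nat_const; apply: leq_sum => X /setIP[XN]; rewrite inE => dX.
  have [e ecut] := NR_cut XN.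
  have dep := cut_dep (X := X) (ends := ends) (introT (set0Pn _) (ex_intro _ e ecut)).
  have [C cC sC] := ex_circuit dep.
  apply: leq_trans (wsum_sub sC); apply: Hc => //.
  exact: disjointWl sC dX.
apply: leq_trans step1 _.
rewrite /WF big_distrr /=.
have -> : \sum_(X in Good) wsum w (cut ends X) =
   \sum_(X in Good) \sum_e (e \in cut ends X) * w e.
  by apply: eq_bigr => X _; rewrite /wsum big_mkcond; apply: eq_bigr => e _; case: (_ \in _); rewrite ?mul1n.
rewrite exchange_big /= [X in _ <= X]big_mkcond /=; apply: leq_sum => e _.
rewrite -big_distrl /=.
case: ifP => eN.
  rewrite mulnC [X in _ <= X]mulnC leq_mul2l; apply/orP; right.
  apply: leq_trans (_ : \sum_(X in [set cl ends F (ends e).1; cl ends F (ends e).2]) 1 <= 2).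
    rewrite [X in _ <= X]big_mkcond /= big_mkcond /=; apply: leq_sum => X _.
    case: (boolP (X \in Good)) => XG //=; case: (boolP (e \in cut ends X)) => ec //.
    move: XG => /setIP[XN _]; have [_ [->|->]] := NR_cut_mem XN ec; by rewrite !inE eqxx ?orbT.
  by rewrite sum1_card cards2; case: (_ != _).
rewrite big1 ?mul0n // => X /setIP[XN]; rewrite inE => dX.
case: (boolP (e \in cut ends X)) => // ec; exfalso.
move/negbT: eN; rewrite !inE; have [nc _] := NR_cut_mem XN ec; rewrite nc andbT negbK => eR.
by have := disjointFr dX ec; rewrite eR.
Qed.

Lemma Lset_add F e : Lset (e |: F) = [set C in Lset F | e \notin C].
Proof.
apply/setP => C; rewrite !inE -!andbA; congr [&& _, _, _ & _].
have h1 : (C :&: [set e] == set0) = (e \notin C) by rewrite setI_eq0 disjoint_sym disjoints1.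
rewrite -!setI_eq0 setIUr setU_eq0 h1; congr (_ && _); exact: andbC.
Qed.

Lemma avg F : Nf F * (2 * WF F - alpha * r) <= 2 * \sum_(e in NF F) w e * Nf (e |: F).
Proof.
have -> : \sum_(e in NF F) w e * Nf (e |: F) = \sum_(C in Lset F) \sum_(e in NF F) (e \notin C) * w e.
  rewrite exchange_big /=; apply: eq_bigr => e _.
  rewrite /Nf Lset_add -sum1_card big_distrr /= [in RHS]big_mkcond /= [in LHS]big_mkcond /=.
  apply: eq_bigr => C _; rewrite [C \in [set _ in _ | _]]in_set.
  by case: (C \in Lset F); case: (e \in C); rewrite ?muln1 ?muln0 ?mul1n ?mul0n.
rewrite /Nf -sum_nat_const [X in _ <= X]big_distrr /=; apply: leq_sum => C.
rewrite inE => /and4P[_ _ light _].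
rewrite leq_subLR.
have : WF F <= \sum_(e in NF F) (e \notin C) * w e + wsum w C.
  rewrite /WF /wsum (bigID (fun e => e \in C)) /= addnC leq_add //.
    rewrite big_mkcondr /=; apply: eq_leq; apply: eq_bigr => e _; by case: (e \in C); rewrite ?mul1n.
  rewrite big_mkcond /= [X in _ <= X]big_mkcond /=; apply: leq_sum => e _.
  by case: (e \in NF F); case: (e \in C).
move=> h; have := leq_mul (leqnn 2) h; rewrite mulnDr => h2.
apply: leq_trans h2 _; rewrite addnC leq_add2r; exact: ltnW.
Qed.

Lemma step F : alpha < #|NR ends rho F| - #|R| ->
  Nf F * ((#|NR ends rho F| - #|R|) - alpha) <=
    (#|NR ends rho F| - #|R|) * \max_(e in NF F) Nf (e |: F).
Proof.
set t := _ - _ => lt; set M := \max_(e in NF F) _.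
have h1 := avg F; have h2 := star F.
have h3 : 2 * \sum_(e in NF F) w e * Nf (e |: F) <= 2 * WF F * M.
  rewrite -mulnA leq_mul2l /= /WF big_distrl /=; apply: leq_sum => e eN.
  rewrite leq_mul2l; apply/orP; right; exact: (@leq_bigmax_cond _ (fun e => e \in NF F) (fun e => Nf (e |: F)) e eN).
have h4 := leq_trans h1 h3.
set W2 := 2 * WF F in h2 h4 *.
have d0 : alpha * r < W2.
  by move: h2 lt r_gt0; clear; nia.
exact: arith_step h4 h2 lt r_gt0.
Qed.

Definition gb s := if s - #|R| <= alpha then 2 ^ s else 'C(s - #|R|, alpha) * 2 ^ (alpha + #|R|).

Lemma gb_mono a b : a <= b -> gb a <= gb b.
Proof.
move=> ab; rewrite /gb.
case: ifP => ha; case: ifP => hb; rewrite ?ha ?hb in ab *; try move/negbT in ha; try move/negbT in hb.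
- by rewrite leq_exp2l.
- apply: leq_trans (_ : 2 ^ (alpha + #|R|) <= _).
    by rewrite leq_exp2l //; lia.
  by rewrite leq_pmull // bin_gt0; lia.
- exfalso; lia.
- by rewrite leq_mul2r leq_bin2l ?orbT // leq_sub2r.
Qed.

Lemma karger F : Nf F <= gb (kc ends F - #|RT rho|).
Proof.
move: {2}(kc ends F) (leqnn (kc ends F)) => n; elim: n F => [|n IH] F hF;
  have hNR := NR_card rho1 rho2 F;
  case: (leqP (kc ends F - #|RT rho| - #|R|) alpha) => hs;
  try by rewrite /gb hs -hNR; apply: base_count => // C; rewrite inE => /and4P[? _ _ ?]; split.
  by exfalso; move: hF hs; clear; lia.
have := step (F := F); rewrite hNR => /(_ hs) st.
set t := kc ends F - #|RT rho| - #|R| in hs st *.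
have hM : \max_(e in NF F) Nf (e |: F) <= 'C(t.-1, alpha) * 2 ^ (alpha + #|R|).
  apply/bigmax_leqP => e; rewrite !inE => /andP[_ nc].
  have lt := kc_add_lt nc.
  have h := IH (e |: F) (leq_trans lt hF).
  apply: (leq_trans h); apply: leq_trans (gb_mono (b := (kc ends F - #|RT rho|).-1) _) _.
    have := kc_ge rho1 rho2 (e |: F); move: lt; clear; lia.
  rewrite /gb; case: ifP => h1.
    have -> : t.-1 = alpha by move: hs h1; rewrite /t; clear; lia.
    rewrite binn mul1n leq_exp2l //; move: h1; rewrite /t; clear; lia.
  by have -> : (kc ends F - #|RT rho|).-1 - #|R| = t.-1 by rewrite /t; clear; lia.
have := leq_trans st (leq_mul (leqnn t) hM).
rewrite mulnA mul_bin_down /gb.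
rewrite -/t; have -> : (t <= alpha) = false by rewrite leqNgt hs.
rewrite -mulnA [X in _ <= X -> _]mulnC leq_mul2r => /orP[/eqP h0|//].
by move: hs h0; clear; lia.
Qed.

End Karger.


Lemma ffact_le_exp n k : n ^_ k <= n ^ k.
Proof.
elim: k n => [|k IH] n; first by rewrite ffactn0 expn0.
rewrite ffactnS expnS leq_mul2l; apply/orP; right.
apply: leq_trans (IH _) _; case: k {IH} => [|k]; first by rewrite !expn0.
by rewrite leq_exp2r // leq_pred.
Qed.

Lemma bin_le_exp n k : 'C(n, k) <= n ^ k.
Proof.
apply: leq_trans (ffact_le_exp n k); by rewrite -bin_ffact leq_pmulr ?fact_gt0.
Qed.

Lemma bin2_le_exp n k : 1 < k -> 2 * 'C(n, k) <= n ^ k.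
Proof.
move=> k1; apply: leq_trans (ffact_le_exp n k); rewrite -bin_ffact mulnC leq_mul2l.
apply/orP; right; case: k k1 => [|[|k]] // _.
by rewrite factS (leq_trans _ (leq_pmulr _ (fact_gt0 _))) //.
Qed.

Lemma final_arith m k alpha : 1 < m -> k <= 1 -> 1 < alpha ->
  (if m - k <= alpha then 2 ^ m else 'C(m - k, alpha) * 2 ^ (alpha + k))
    <= (2 * (m - k)) ^ alpha.
Proof.
move=> m1 k1 a1; rewrite expnMn.
case: k k1 => [|[|//]] _.
  rewrite !subn0 addn0; case: ifP => h.
    apply: leq_trans (_ : 2 ^ alpha <= _); first by rewrite leq_exp2l.
    by rewrite leq_pmulr // expn_gt0; lia.
  by rewrite mulnC leq_mul2l bin_le_exp orbT.
case: ifP => h.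
  case: m m1 h => [|[|[|m]]] //= _ h.
    by rewrite subn1 /= exp1n muln1 leq_exp2l.
  apply: leq_trans (_ : 2 ^ (alpha + 1) <= _); first by rewrite leq_exp2l //; lia.
  rewrite expnD expn1 leq_mul2l; apply/orP; right.
  apply: leq_trans (_ : 2 ^ 1 <= _) => //; apply: leq_trans (_ : 2 ^ alpha <= _).
    by rewrite leq_exp2l //; lia.
  by rewrite leq_exp2r; lia.
rewrite expnD expn1 mulnCA leq_mul2l; apply/orP; right.
by rewrite mulnC bin2_le_exp.
Qed.

Theorem cographic_thm (V E : finType) (ends : E -> V * V) (w : E -> nat) (R : {set E}) (r : nat) :
  2 <= #|E| -> #|R| <= 1 -> 0 < r ->
  (forall C : {set E}, is_circuit (dual_indep (is_forest ends)) C ->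
      [disjoint C & R] -> r <= wsum w C) ->
  forall alpha : nat, 2 <= alpha ->
    #|[set C : {set E} | is_circuit (dual_indep (is_forest ends)) C
                          && (R \subset C) && (2 * wsum w C < alpha * r)]|
    <= (2 * (#|E| - #|R|)) ^ alpha.
Proof.
move=> hE hR r0 Hc alpha ha.
have [e0 _] : exists e0 : E, e0 \in [set: E].
  by apply/card_gt0P; rewrite cardsT; apply: leq_trans hE.
have [u hu] : exists u : V, forall g, g \in R -> u = (ends g).1.
  case: (pickP (mem R)) => [g gR|none]; last by exists (ends e0).1 => g gR; have := none g; rewrite /= gR.
  exists (ends g).1 => g' g'R; have /card_le1_eqP := hR; by move/(_ _ _ gR g'R) => ->.
pose cE := connect (adj_in ends [set: E]).
pose rho := fun x => if cE x u then u else root (adj_in ends [set: E]) x.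
have rho1 : forall x, cE x (rho x).
  by move=> x; rewrite /rho; case: ifP => // _; apply: connect_root.
have rho2 : forall x y, cE x y -> rho x = rho y.
  move=> x y cxy; rewrite /rho.
  have -> : cE x u = cE y u.
    apply/idP/idP => h; first by apply: conn_trans h; rewrite conn_sym.
    exact: conn_trans cxy h.
  case: ifP => // _; apply/(rootP (sym_connect_sym (adj_sym ends _))); exact: cxy.
have HR : forall F, #|[set X in NR ends rho F | ~~ [disjoint cut ends X & R]]| <= #|R|.
  move=> F; case: (pickP (mem R)) => [g gR | none].
    have eR : R = [set g].
      apply/setP => z; rewrite inE; apply/idP/idP => [zR|/eqP ->//].
      by have /card_le1_eqP := hR; move/(_ _ _ zR gR) => ->.
    rewrite eR cards1; apply: leq_trans (_ : #|[set cl ends F (ends g).2]| <= 1); last by rewrite cards1.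
    apply: subset_leq_card; apply/subsetP => X; rewrite inE => /andP[XN nd].
    move: nd; rewrite -setI_eq0 => /set0Pn [e /setIP[ec eR']].
    move: eR'; rewrite inE => /eqP eg; subst e.
    have [_ [eX|->]] := NR_cut_mem rho1 rho2 XN ec; last by rewrite inE.
    exfalso; move: XN; rewrite eX => /(NRP rho1 rho2) [x /cl_eqP cx nc].
    have cxE : cE x (ends g).1 by apply: (conn_mono (F := F)); [apply: subsetT | rewrite conn_sym].
    move: nc; rewrite (rho2 _ _ cxE) /rho /cE (hu g gR) connect0 /=.
    by rewrite conn_sym cx.
  have -> : R = set0 by apply/setP => z; rewrite inE; apply/negP => zR; have := none z; rewrite /= zR.
  rewrite cards0 leqn0 cards_eq0; apply/eqP/setP => X; rewrite !inE.
  by rewrite -setI_eq0 setI0 eqxx andbF.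
have K := karger rho1 rho2 r0 ha Hc HR set0.
apply: leq_trans (_ : Nf ends w R r alpha set0 <= _).
  apply: eq_leq; apply: eq_card => C; rewrite !inE.
  have -> : [disjoint C & set0] by rewrite -setI_eq0 setI0 eqxx.
  by rewrite andbT -andbA.
apply: leq_trans K _; apply: leq_trans (gb_mono R r0 ha (s0_le rho1 rho2)) _.
rewrite /gb; exact: final_arith.
Qed.

Section Trail.
Variables (V E : finType) (ends : E -> V * V).
Implicit Types (F B A C D G : {set E}).
Local Notation conn F := (connect (adj_in ends F)).
Local Notation forest := (is_forest ends).

Definition tl (s : E * bool) := if s.2 then (ends s.1).1 else (ends s.1).2.
Definition hd (s : E * bool) := if s.2 then (ends s.1).2 else (ends s.1).1.

Fixpoint trail (x : V) (t : seq (E * bool)) (y : V) : bool :=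
  if t is s :: t' then (tl s == x) && trail (hd s) t' y else x == y.

Definition eset (t : seq (E * bool)) := [set f in map fst t].

Lemma trail_cat x t1 t2 z y : trail x t1 z -> trail z t2 y -> trail x (t1 ++ t2) y.
Proof. elim: t1 x => [|s t1 IH] x /=; first by move/eqP ->. by case/andP=> -> /IH h /h. Qed.

Lemma trail_split x t1 t2 y : trail x (t1 ++ t2) y -> exists z, trail x t1 z /\ trail z t2 y.
Proof.
elim: t1 x => [|s t1 IH] x /=; first by move=> h; exists x; rewrite eqxx.
case/andP=> /eqP e /IH [z [h1 h2]]; exists z; by rewrite e eqxx h1.
Qed.

Lemma step_conn F s : s.1 \in F -> conn F (tl s) (hd s).
Proof. move=> sF; rewrite /tl /hd; case: s.2 sF; [exact: conn_edge | exact: conn_edge']. Qed.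

Lemma trail_conn F x t y : trail x t y -> {subset map fst t <= F} -> conn F x y.
Proof.
elim: t x => [|s t IH] x /=; first by move/eqP ->.
case/andP=> /eqP <- tr sub.
apply: conn_trans (step_conn (sub _ (mem_head _ _))) (IH _ tr _).
by move=> f ft; apply: sub; rewrite inE ft orbT.
Qed.

Lemma conn_trail F x y : conn F x y ->
  exists t, [/\ trail x t y, uniq (map fst t) & {subset map fst t <= F}].
Proof.
case/connectP=> p pp ly; case/shortenP: pp ly => p' pp' up' _ ly'.
suff [t [h1 h2 h3 _]] : exists t, [/\ trail x t (last x p'), uniq (map fst t), {subset map fst t <= F}
   & forall s, s \in t -> ((ends s.1).1 \in x :: p') && ((ends s.1).2 \in x :: p')].
  by exists t; rewrite ly'.
clear p; elim: p' x pp' up' {ly'} => [|z p IH] x /=.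
  by move=> _ _; exists [::]; split => //= s; rewrite inE.
case/andP=> axz pz /andP[xn up].
have [t [t1 t2 t3 t4]] := IH z pz up.
case/adj_inP: axz => f fF /orP[] /eqP ef.
- exists ((f, true) :: t); split => /=.
  + by rewrite /tl /hd ef /= eqxx t1.
  + rewrite t2 andbT; apply/negP => /mapP [s st sf].
    have := t4 s st; rewrite -sf ef /= => /andP[h _]; by rewrite h in xn.
  + by move=> g; rewrite inE => /orP[/eqP ->|/t3].
  + move=> s; rewrite inE => /orP[/eqP ->|/t4]; first by rewrite /= ef !inE !eqxx !orbT.
    by case/andP => h1 h2; rewrite !(in_cons x) h1 h2 !orbT.
- exists ((f, false) :: t); split => /=.
  + by rewrite /tl /hd ef /= eqxx t1.
  + rewrite t2 andbT; apply/negP => /mapP [s st sf].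
    have := t4 s st; rewrite -sf ef /= => /andP[_ h]; by rewrite h in xn.
  + by move=> g; rewrite inE => /orP[/eqP ->|/t3].
  + move=> s; rewrite inE => /orP[/eqP ->|/t4]; first by rewrite /= ef !inE !eqxx !orbT.
    by case/andP => h1 h2; rewrite !(in_cons x) h1 h2 !orbT.
Qed.

Lemma trail_rev_conn F s : conn F (hd s) (tl s) = conn F (tl s) (hd s).
Proof. by rewrite conn_sym. Qed.

Lemma ends_conn F s : conn F (tl s) (hd s) -> conn F (ends s.1).1 (ends s.1).2.
Proof. by rewrite /tl /hd; case: s.2 => //; rewrite conn_sym. Qed.

Lemma forest_trail F x t y f : forest F -> trail x t y -> uniq (map fst t) ->
  {subset map fst t <= F} -> f \in F -> (f \in map fst t) = ~~ conn (F :\ f) x y.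
Proof.
move=> fF tr ut sub fin; apply/idP/idP => [ft|].
  case/mapP: ft => s st sf; case/splitPr: st tr ut sub => t1 t2 tr ut sub.
  have [z [tr1 tr2]] := trail_split tr; move: tr2 => /= /andP[/eqP ez tr2].
  rewrite map_cat cat_uniq /= in ut; case/and3P: ut => _ nin /andP[nin2 _].
  rewrite negb_or in nin; case/andP: nin => nin1 _.
  have sub1 : {subset map fst t1 <= F :\ f}.
    move=> g gt; rewrite !inE (sub g) ?andbT ?map_cat ?mem_cat ?gt //.
    by apply/eqP => eg; move: nin1; rewrite -sf -eg gt.
  have sub2 : {subset map fst t2 <= F :\ f}.
    move=> g gt; rewrite !inE (sub g) ?andbT ?map_cat ?mem_cat /= ?inE ?gt ?orbT //.
    by apply/eqP => eg; move: gt; rewrite eg sf (negbTE nin2).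
  have c1 := trail_conn tr1 sub1; have c2 := trail_conn tr2 sub2.
  apply/negP => cxy; move/forestP: fF => /(_ f fin); apply/negP/negPn.
  rewrite sf in c1 c2 cxy *; apply: ends_conn; rewrite ez.
  apply: conn_trans (_ : conn _ z y) _; first by rewrite conn_sym in c1; exact: conn_trans c1 cxy.
  by rewrite conn_sym.
apply: contraR => nft; apply: trail_conn tr _ => g gt; rewrite !inE (sub g gt) andbT.
by apply/eqP => eg; subst g; rewrite gt in nft.
Qed.

Lemma trails_eset x y t t' : trail x t y -> trail x t' y -> uniq (map fst t) -> uniq (map fst t') ->
  forest (eset t :|: eset t') -> eset t = eset t'.
Proof.
move=> tr tr' u u' fF.
have sub : {subset map fst t <= eset t :|: eset t'} by move=> f ft; rewrite !inE ft.
have sub' : {subset map fst t' <= eset t :|: eset t'} by move=> f ft; rewrite !inE ft orbT.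
apply/setP => f; rewrite !inE.
case: (boolP (f \in eset t :|: eset t')) => fin.
  by rewrite (forest_trail fF tr u sub fin) (forest_trail fF tr' u' sub' fin).
by move: fin; rewrite !inE negb_or => /andP[/negbTE -> /negbTE ->].
Qed.

Lemma circuit_cycle C c : is_circuit forest C -> c \in C ->
  exists t, [/\ trail (ends c).2 t (ends c).1, uniq (map fst t), c \notin map fst t
     & C = c |: eset t].
Proof.
case/andP=> nC /forallP minC cC.
have fill : forall e t, e \in C -> trail (ends e).2 t (ends e).1 -> {subset map fst t <= C :\ e} ->
    C = e |: eset t.
  move=> e t eC tr sub.
  have sP : e |: eset t \subset C.
    by apply/subsetP => f; rewrite !inE => /orP[/eqP ->//|/sub]; rewrite inE => /andP[].
  have nf : ~~ forest (e |: eset t).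
    apply: conn_notforest; first by rewrite inE; apply/negP => /sub; rewrite !inE eqxx.
    by rewrite conn_sym; apply: trail_conn tr _ => f ft; rewrite inE.
  case: (eqVproper sP) => // pr; by move: (implyP (minC _) pr); rewrite (negbTE nf).
suff cc : conn (C :\ c) (ends c).2 (ends c).1.
  have [t [tr u sub]] := conn_trail cc; exists t; split => //.
    by apply/negP => /sub; rewrite !inE eqxx.
  exact: fill c t cC tr sub.
have [e eC ce] : exists2 e, e \in C & conn (C :\ e) (ends e).1 (ends e).2.
  apply/exists_inP; move: nC; apply: contraR => /exists_inP ne; apply/forestP => e eC.
  by apply/negP => h; apply: ne; exists e.
case: (eqVneq e c) => [<-|nec]; first by rewrite conn_sym.
have [t [tr u sub]] := conn_trail ce.
rewrite conn_sym in ce.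
have ce' : conn (C :\ e) (ends e).2 (ends e).1 by [].
have [t' [tr' u' sub']] := conn_trail ce'.
have eqC := fill e t' eC tr' sub'.
have ct : c \in map fst t'.
  by move: cC; rewrite {1}eqC !inE eq_sym (negbTE nec).
case/mapP: ct => s st sc; case/splitPr: st tr' u' sub' => t1 t2 tr' u' sub'.
have [z [tr1 tr2]] := trail_split tr'; move: tr2 => /= /andP[/eqP ez tr2].
rewrite map_cat cat_uniq /= in u'; case/and3P: u' => _ nin /andP[nin2 _].
rewrite negb_or in nin; case/andP: nin => nin1 _.
have sub1 : {subset map fst t1 <= C :\ c}.
  move=> g gt; have := sub' g; rewrite map_cat mem_cat gt => /(_ isT); rewrite !inE => /andP[_ ->].
  by rewrite andbT; apply/eqP => eg; move: nin1; rewrite -sc -eg gt.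
have sub2 : {subset map fst t2 <= C :\ c}.
  move=> g gt; have := sub' g; rewrite map_cat mem_cat /= inE gt !orbT => /(_ isT); rewrite !inE => /andP[_ ->].
  by rewrite andbT; apply/eqP => eg; move: gt; rewrite eg sc (negbTE nin2).
have c1 := trail_conn tr1 sub1; have c2 := trail_conn tr2 sub2.
have eCc : e \in C :\ c by rewrite !inE nec.
have ce2 : conn (C :\ c) (ends e).1 (ends e).2 by apply: conn_edge.
(* hd s ~ e.1 via t2, e.1 ~ e.2 via e, e.2 ~ tl s via t1 *)
have key : conn (C :\ c) (hd s) (tl s).
  rewrite ez; apply: conn_trans c2 _; exact: conn_trans ce2 c1.
move: key; rewrite /tl /hd -sc; case: s.2 => //; by rewrite conn_sym.
Qed.

End Trail.

Lemma disjU (T : finType) (A B C : {set T}) :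
  [disjoint A :|: B & C] = [disjoint A & C] && [disjoint B & C].
Proof. by rewrite -!setI_eq0 setIUl setU_eq0. Qed.

Section GR.
Variables (V E : finType) (ends : E -> V * V).
Implicit Types (F B A C D G : {set E}).
Local Notation conn F := (connect (adj_in ends F)).
Local Notation forest := (is_forest ends).
Local Notation trail := (trail ends).
Variables (w : E -> nat) (R : {set E}) (r : nat).
Hypothesis r0 : 0 < r.
Hypothesis Hc : forall C, is_circuit forest C -> [disjoint C & R] -> r <= wsum w C.

Definition wl (t : seq (E * bool)) := \sum_(s <- t) w s.1.

Lemma wl_cat t1 t2 : wl (t1 ++ t2) = wl t1 + wl t2.
Proof. by rewrite /wl big_cat. Qed.
Lemma wl_cons s t : wl (s :: t) = w s.1 + wl t.
Proof. by rewrite /wl big_cons. Qed.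

Lemma wsum_eset t : uniq (map fst t) -> wsum w (eset t) = wl t.
Proof.
move=> u; rewrite /wsum /wl -(big_map fst xpredT (fun e => w e)) big_uniq //.
by apply: eq_bigl => e; rewrite inE.
Qed.

Lemma wsumU A B : wsum w (A :|: B) <= wsum w A + wsum w B.
Proof.
rewrite /wsum (big_mkcond (fun e => e \in A :|: B)) (big_mkcond (fun e => e \in A))
  (big_mkcond (fun e => e \in B)) -big_split /=; apply: leq_sum => e _.
by rewrite inE; case: (e \in A); case: (e \in B); rewrite ?addn0 ?leq_addr.
Qed.

Lemma wsum_le A B : A \subset B -> wsum w A <= wsum w B.
Proof.
move=> sAB; rewrite /wsum (big_mkcond (fun e => e \in A)) (big_mkcond (fun e => e \in B)).
apply: leq_sum => e _; case: (boolP (e \in A)) => eA; last by [].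
by rewrite (subsetP sAB e eA).
Qed.

Lemma arc_eq x y t t' : trail x t y -> trail x t' y -> uniq (map fst t) -> uniq (map fst t') ->
  [disjoint eset t & R] -> [disjoint eset t' & R] -> 2 * wl t < r -> 2 * wl t' < r ->
  eset t = eset t'.
Proof.
move=> tr tr' u u' d d' l l'.
case: (boolP (forest (eset t :|: eset t'))) => fF; first exact: trails_eset tr tr' u u' fF.
exfalso; have [D cD sD] := ex_circuit fF.
have dD : [disjoint D & R] by apply: disjointWl sD _; rewrite disjU d d'.
have := Hc cD dD; have := wsum_le sD; have := wsumU (eset t) (eset t').
rewrite !wsum_eset //; move: l l'; clear; lia.
Qed.

Fixpoint greedy (acc : nat) (t : seq (E * bool)) : seq (E * bool) :=
  if t is s :: t' then
    (if 2 * (acc + w s.1) < r then greedy (acc + w s.1) t' else s :: greedy 0 t')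
  else [::].

Fixpoint decP (acc : nat) (M t : seq (E * bool)) : Prop :=
  if M is m :: M' then exists t1 t2, [/\ t = t1 ++ m :: t2, 2 * (acc + wl t1) < r & decP 0 M' t2]
  else 2 * (acc + wl t) < r.

Lemma decP_cons acc s M t : decP (acc + w s.1) M t -> decP acc M (s :: t).
Proof.
case: M => [|m M] /=; first by rewrite wl_cons addnA.
case=> t1 [t2 [-> h1 h2]]; exists (s :: t1), t2; split => //; by rewrite wl_cons addnA.
Qed.

Lemma greedy_dec acc t : 2 * acc < r -> decP acc (greedy acc t) t.
Proof.
elim: t acc => [|s t IH] acc /=; first by rewrite /wl big_nil addn0.
move=> h; case: ifP => h2; first exact: decP_cons (IH _ h2).
by exists [::], t; split => //; [rewrite /wl big_nil addn0 | apply: IH; rewrite muln0].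
Qed.

Lemma greedy_size acc t : r * size (greedy acc t) <= 2 * (acc + wl t).
Proof.
elim: t acc => [|s t IH] acc /=; first by rewrite muln0.
case: ifP => h.
  by apply: leq_trans (IH _) _; rewrite wl_cons addnA.
move/negbT: h; rewrite -leqNgt => h; have := IH 0; rewrite wl_cons /=.
move: h; clear; lia.
Qed.

Lemma greedy_sub acc t : {subset greedy acc t <= t}.
Proof.
elim: t acc => [|s t IH] acc //= x; case: ifP => _.
  by move/IH; rewrite inE => ->; rewrite orbT.
by rewrite !inE => /orP[->//|/IH ->]; rewrite orbT.
Qed.

Lemma eset_cat (t1 : seq (E * bool)) s t2 : eset (t1 ++ s :: t2) = eset t1 :|: (s.1 |: eset t2).
Proof. by apply/setP => f; rewrite !inE map_cat mem_cat /= inE. Qed.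

Lemma dec_unique M : forall x y t t', decP 0 M t -> decP 0 M t' ->
  trail x t y -> trail x t' y -> uniq (map fst t) -> uniq (map fst t') ->
  [disjoint eset t & R] -> [disjoint eset t' & R] -> eset t = eset t'.
Proof.
elim: M => [|m M IH] x y t t' /=.
  move=> l l' tr tr' u u' d d'; exact: arc_eq tr tr' u u' d d' l l'.
case=> t1 [t2 [-> l1 dec2]] [t1' [t2' [-> l1' dec2']]] tr tr' u u' d d'.
have [z [tr1 /= /andP[/eqP ez tr2]]] := trail_split tr.
have [z' [tr1' /= /andP[/eqP ez' tr2']]] := trail_split tr'.
subst z z'.
rewrite !map_cat !cat_uniq /= in u u'.
case/and3P: u => u1 _ /andP[_ u2]; case/and3P: u' => u1' _ /andP[_ u2'].
rewrite !eset_cat !disjU in d d'.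
case/andP: d => d1 /andP[_ d2]; case/andP: d' => d1' /andP[_ d2'].
rewrite !eset_cat (arc_eq tr1 tr1' u1 u1' d1 d1' l1 l1').
by rewrite (IH _ _ _ _ dec2 dec2' tr2 tr2' u2 u2' d2 d2').
Qed.

End GR.

Section Seqs.
Variable (X : eqType) (Sg : seq X).
Fixpoint seqs (n : nat) : seq (seq X) :=
  if n is n'.+1 then [seq x :: s | x <- Sg, s <- seqs n'] else [:: [::]].

Lemma size_seqs n : size (seqs n) = size Sg ^ n.
Proof. by elim: n => //= n IH; rewrite size_allpairs IH expnS. Qed.

Lemma mem_seqs s : all (mem Sg) s -> s \in seqs (size s).
Proof.
elim: s => [|x s IH] /=; first by rewrite inE.
by case/andP=> xS /IH sS; apply: (allpairs_f (fun x s => x :: s)).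
Qed.

Definition seqs_lt n := flatten [seq seqs i | i <- iota 0 n].

Lemma size_seqs_lt n : size (seqs_lt n) = \sum_(i < n) size Sg ^ i.
Proof.
rewrite /seqs_lt size_flatten /shape -map_comp.
rewrite (eq_map (g := fun i => size Sg ^ i)); last by move=> i /=; rewrite size_seqs.
by rewrite sumnE big_map -(big_mkord xpredT (fun i => size Sg ^ i)) /index_iota subn0.
Qed.

Lemma mem_seqs_lt n s : all (mem Sg) s -> size s < n -> s \in seqs_lt n.
Proof.
move=> a lt; apply/flattenP; exists (seqs (size s)); last exact: mem_seqs.
by apply: map_f; rewrite mem_iota.
Qed.
End Seqs.

Theorem graphic_thm (V E : finType) (ends : E -> V * V) (w : E -> nat) (R : {set E}) (r : nat) :
  2 <= #|E| -> #|R| <= 1 -> 0 < r ->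
  (forall C : {set E}, is_circuit (is_forest ends) C ->
      [disjoint C & R] -> r <= wsum w C) ->
  forall alpha : nat, 2 <= alpha ->
    #|[set C : {set E} | is_circuit (is_forest ends) C
                          && (R \subset C) && (2 * wsum w C < alpha * r)]|
    <= (2 * (#|E| - #|R|)) ^ alpha.
Proof.
move=> hE hR r0 Hc alpha ha.
pose Sg := [seq (e, b) | e <- enum (~: R), b <- [:: true; false]].
pose cands := if R == set0 then [set: E] else R.
pose codes := [seq (c, true) :: M | c <- enum cands, M <- seqs_lt Sg alpha].
have Rsub : forall c, c \in cands -> R \subset [set c].
  move=> c; rewrite /cands; case: ifP => [/eqP -> _|_ cR]; first exact: sub0set.
  apply/subsetP => z zR; rewrite inE; apply/eqP.
  by have /card_le1_eqP := hR; move/(_ _ _ zR cR).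
apply: leq_trans (_ : size codes <= _).
  apply: (card_le_code (Rel := fun C code => exists c t, [/\ code = (c, true) :: greedy w r 0 t,
     c \in cands, trail ends (ends c).2 t (ends c).1, uniq (map fst t) && (c \notin map fst t)
     & C = c |: eset t])).
    move=> C; rewrite inE => /andP[/andP[cC RC] light].
    have [c cc cC'] : exists2 c, c \in cands & c \in C.
      rewrite /cands; case: ifP => [/eqP R0|nR].
        case: (set_0Vmem C) => [C0|[c cC']]; last by exists c; rewrite ?in_setT.
        exfalso; move: cC; rewrite C0 => /andP[nf _]; move: nf => /negP; apply.
        by apply/forestP => e; rewrite inE.
      case: (set_0Vmem R) => [R0|[c cR]]; first by rewrite R0 eqxx in nR.
      by exists c => //; apply: (subsetP RC).
    have [t [tr u nc eC]] := circuit_cycle cC cC'.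
    exists ((c, true) :: greedy w r 0 t); last by exists c, t; rewrite u nc.
    apply: (allpairs_f (fun c M => (c, true) :: M)); first by rewrite mem_enum.
    apply: mem_seqs_lt.
      apply/allP => s /(greedy_sub (w := w) (r := r)) st.
      have s1 : s.1 \in map fst t by apply: map_f.
      have s1R : s.1 \in ~: R.
        rewrite inE; apply/negP => /(subsetP (Rsub c cc)); rewrite inE => /eqP e.
        by rewrite -e s1 in nc.
      rewrite [s]surjective_pairing; apply: (allpairs_f (fun e b => (e, b))).
        by rewrite mem_enum.
      by case: s.2; rewrite !inE.
    have := greedy_size w r 0 t; rewrite add0n.
    have : wsum w C = w c + wl w t.
      rewrite eC /wsum big_setU1 /=; first by rewrite -(wsum_eset w u).
      by rewrite inE.
    move=> eW; rewrite eW in light => h.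
    have : r * size (greedy w r 0 t) < alpha * r by move: light h; clear; lia.
    by rewrite mulnC ltn_pmul2r.
  move=> C C' code _ _ [c [t [-> cc tr /andP[u nc] ->]]] [c' [t' [[<- e2] _ tr' /andP[u' nc'] ->]]].
  congr (_ |: _).
  have dec := greedy_dec w r0 (acc:=0) t r0; have dec' := greedy_dec w r0 (acc:=0) t' r0.
  rewrite e2 in dec.
  have dis : forall t0, c \notin map fst t0 -> [disjoint eset t0 & R].
    move=> t0 n0; apply: (disjointWr (Rsub c cc)); rewrite disjoint_sym disjoints1 inE //.
  apply: (dec_unique (w := w) (r := r) Hc dec dec' tr tr' u u' (dis _ nc) (dis _ nc')).
rewrite size_allpairs size_seqs_lt -cardE.
have hq : size Sg = 2 * (#|E| - #|R|).
  by rewrite size_allpairs -cardE /= mulnC -(cardsC R) addKn.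
rewrite hq; set q := 2 * _.
have hc : #|cands| <= q.-1.
  rewrite /cands; case: ifP => [/eqP R0 | nR].
    by rewrite cardsT /q R0 cards0; move: hE; clear; lia.
  have : 0 < #|R| by rewrite card_gt0 nR.
  by rewrite /q; move: hE hR; clear; lia.
apply: leq_trans (leq_mul hc (leqnn _)) _; rewrite -predn_exp; exact: leq_pred.
Qed.

Theorem mainTheorem7
  (V E : finType) (ends : E -> V * V) (cographic : bool)
  (w : E -> nat) (R : {set E}) (r : nat) :
  2 <= #|E| ->
  #|R| <= 1 ->
  0 < r ->
  (forall C : {set E},
      is_circuit (graph_matroid_indep ends cographic) C ->
      [disjoint C & R] -> r <= wsum w C) ->
  forall alpha : nat, 2 <= alpha ->
    #|[set C : {set E} | is_circuit (graph_matroid_indep ends cographic) C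
                          && (R \subset C) && (2 * wsum w C < alpha * r)]|
    <= (2 * (#|E| - #|R|)) ^ alpha.
Proof.
move=> hE hR r0 Hc alpha ha; case: cographic Hc => Hc.
  exact: (cographic_thm hE hR r0 Hc ha).
exact: (graphic_thm hE hR r0 Hc ha).
Qed.
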